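(* Let $(X,d)$ be a complete b-metric space with coefficient $s \geq 1$, and let $T: X \to X$ be a continuous PA-contraction with contraction constant $\alpha \in (0,1)$ such that $s\alpha < 1$. Then $T$ has a unique fixed point in $X$, and for every $x \in X$ the sequence $\{T^n x\}_{n\ge 0}$ converges to this fixed point.
   Context: A b-metric space with coefficient $s \ge 1$ is a nonempty set $X$ with a function $d: X\times X \to [0,\infty)$ such that: $d(x,y)=0$ iff $x=y$; $d(x,y)=d(y,x)$ for all $x,y$; and $d(x,z) \le s\,(d(x,y)+d(y,z))$ for all $x,y,z \in X$. A sequence $\{x_n\}$ is Cauchy if $\lim_{m,n\to\infty} d(x_n,x_m)=0$, it converges to $x$ if $d(x_n,x)\to 0$, and the space is complete if every Cauchy sequence converges in $X$; continuity of $T$ means $x_n \to x$ implies $Tx_n \to Tx$. A mapping $T: X\to X$ is a PA-contraction (path-averaged contraction) with contraction constant $\alpha$ if $\alpha \in (0,1)$ and there exists $N \in \mathbb{N}$ such that for all $x,y \in X$ and all $n \ge N$, $$\sum_{k=0}^{n-1} d(T^{k+1}x, T^{k+1}y) \le \alpha \sum_{k=0}^{n-1} d(T^k x, T^k y),$$ where $T^0$ is the identity. *)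

(* Defs.v *)
From Stdlib Require Import Reals Lra.
Open Scope R_scope.

Definition is_b_metric {X : Type} (d : X -> X -> R) (s : R) : Prop :=
  1 <= s /\
  (forall x y, 0 <= d x y) /\
  (forall x y, d x y = 0 <-> x = y) /\
  (forall x y, d x y = d y x) /\
  (forall x y z, d x z <= s * (d x y + d y z)).

Definition b_converges {X : Type} (d : X -> X -> R) (u : nat -> X) (x : X) : Prop :=
  forall eps, eps > 0 -> exists N, forall n, (n >= N)%nat -> d (u n) x < eps.

Definition b_cauchy {X : Type} (d : X -> X -> R) (u : nat -> X) : Prop :=
  forall eps, eps > 0 -> exists N, forall m n, (m >= N)%nat -> (n >= N)%nat ->
    d (u n) (u m) < eps.

Definition b_complete {X : Type} (d : X -> X -> R) : Prop :=
  forall u : nat -> X, b_cauchy d u -> exists x, b_converges d u x.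

Definition b_continuous {X : Type} (d : X -> X -> R) (T : X -> X) : Prop :=
  forall (u : nat -> X) (x : X), b_converges d u x ->
    b_converges d (fun n => T (u n)) (T x).

Fixpoint iter_map {X : Type} (T : X -> X) (k : nat) (x : X) : X :=
  match k with
  | O => x
  | S k' => T (iter_map T k' x)
  end.

Fixpoint sum_lt (f : nat -> R) (n : nat) : R :=
  match n with
  | O => 0
  | S n' => sum_lt f n' + f n'
  end.

Definition PA_contraction {X : Type} (d : X -> X -> R) (T : X -> X) (alpha : R) : Prop :=
  0 < alpha < 1 /\
  exists N : nat, forall x y : X, forall n : nat, (n >= N)%nat ->
    sum_lt (fun k => d (iter_map T (S k) x) (iter_map T (S k) y)) n
    <= alpha * sum_lt (fun k => d (iter_map T k x) (iter_map T k y)) n.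

(* Main.v *)
Require Import Defs.
From Stdlib Require Import Reals Lra Lia.
Open Scope R_scope.

Lemma iter_add {X} (T : X -> X) k m x :
  iter_map T k (iter_map T m x) = iter_map T (k + m) x.
Proof. induction k; simpl; congruence. Qed.

Lemma sum_lt_ext f g n : (forall k, f k = g k) -> sum_lt f n = sum_lt g n.
Proof. intros H; induction n; simpl; [reflexivity|rewrite IHn, H; reflexivity]. Qed.

Lemma sum_lt_shift f n : sum_lt f (S n) = f O + sum_lt (fun k => f (S k)) n.
Proof. induction n; simpl in *; [lra|rewrite IHn; lra]. Qed.

Lemma sum_lt_nonneg f n : (forall k, 0 <= f k) -> 0 <= sum_lt f n.
Proof. intros H; induction n; simpl; [lra| specialize (H n); lra]. Qed.

Section Decay.
Variables (X : Type) (d : X -> X -> R) (T : X -> X) (alpha : R) (N : nat).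
Hypothesis dpos : forall x y, 0 <= d x y.
Hypothesis Hal : 0 < alpha < 1.
Hypothesis HN : forall x y : X, forall n : nat, (n >= N)%nat ->
    sum_lt (fun k => d (iter_map T (S k) x) (iter_map T (S k) y)) n
    <= alpha * sum_lt (fun k => d (iter_map T k x) (iter_map T k y)) n.

Lemma decay x y : exists B, forall m,
  d (iter_map T m x) (iter_map T m y) <= alpha ^ m * B.
Proof.
  set (a := fun k => d (iter_map T k x) (iter_map T k y)).
  set (F := fun m n => sum_lt (fun k => a (k + m)%nat) n).
  assert (Hstep : forall m n, (n >= N)%nat -> F (S m) n <= alpha * F m n).
  { intros m n Hn. unfold F, a.
    specialize (HN (iter_map T m x) (iter_map T m y) n Hn).
    rewrite (sum_lt_ext _ (fun k => d (iter_map T (k + S m) x) (iter_map T (k + S m) y))) in HN.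
    + rewrite (sum_lt_ext (fun k => d (iter_map T k (iter_map T m x)) _)
                (fun k => d (iter_map T (k + m) x) (iter_map T (k + m) y))) in HN.
      * exact HN.
      * intros k; rewrite !iter_add; reflexivity.
    + intros k. change (iter_map T (S k) (iter_map T m x)) with (T (iter_map T k (iter_map T m x))).
      change (iter_map T (S k) (iter_map T m y)) with (T (iter_map T k (iter_map T m y))).
      rewrite !iter_add. replace (k + S m)%nat with (S (k + m)) by lia. reflexivity. }
  assert (Hsh : forall m n, F m (S n) = a m + F (S m) n).
  { intros m n. unfold F. rewrite sum_lt_shift. simpl.
    f_equal. apply sum_lt_ext. intros k. f_equal. lia. }
  assert (Fpos : forall m n, 0 <= F m n).
  { intros; apply sum_lt_nonneg; intros; apply dpos. }
  set (B := Rmax (F 0%nat N) (a 0%nat / (1 - alpha))).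
  assert (Hbase : forall j, F 0%nat (N + j)%nat <= B).
  { induction j.
    - rewrite Nat.add_0_r. apply Rmax_l.
    - replace (N + S j)%nat with (S (N + j)) by lia. rewrite Hsh.
      assert (H1 := Hstep 0%nat (N + j)%nat ltac:(lia)).
      assert (H2 : a 0%nat / (1 - alpha) <= B) by apply Rmax_r.
      assert (H3 : a 0%nat = (1 - alpha) * (a 0%nat / (1 - alpha))) by (field; lra).
      assert (alpha * F 0%nat (N + j)%nat <= alpha * B) by (apply Rmult_le_compat_l; lra).
      assert ((1 - alpha) * (a 0%nat / (1 - alpha)) <= (1 - alpha) * B)
        by (apply Rmult_le_compat_l; lra).
      lra. }
  assert (Hall : forall m n, (n >= N)%nat -> F m n <= alpha ^ m * B).
  { induction m; intros n Hn.
    - simpl. replace n with (N + (n - N))%nat by lia. rewrite Rmult_1_l. apply Hbase.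
    - specialize (Hstep m n Hn). specialize (IHm n Hn). simpl.
      assert (alpha * F m n <= alpha * (alpha ^ m * B)) by (apply Rmult_le_compat_l; lra).
      lra. }
  exists B. intros m. fold (a m).
  specialize (Hall m (S N) ltac:(lia)). rewrite Hsh in Hall.
  specialize (Fpos (S m) N). lra.
Qed.
End Decay.

Lemma cauchy_geo {X} (d : X -> X -> R) s alpha B (u : nat -> X) :
  1 <= s -> 0 < alpha -> s * alpha < 1 -> 0 <= B ->
  (forall x y z, d x z <= s * (d x y + d y z)) ->
  (forall x, d x x = 0) ->
  (forall n, d (u n) (u (S n)) <= alpha ^ n * B) ->
  forall p n, d (u n) (u (n + p)%nat) <= alpha ^ n * (s * B / (1 - s * alpha)).
Proof.
  intros Hs Ha Hsa HB tri d0 Hu.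
  set (K := s * B / (1 - s * alpha)).
  assert (HK : 0 <= K) by (unfold K, Rdiv; apply Rmult_le_pos; [apply Rmult_le_pos; lra| apply Rlt_le, Rinv_0_lt_compat; lra]).
  assert (HK2 : K = s * B + s * alpha * K) by (unfold K; field; lra).
  induction p; intros n.
  - rewrite Nat.add_0_r, d0. apply Rmult_le_pos; [apply pow_le; lra|lra].
  - replace (n + S p)%nat with (S n + p)%nat by lia.
    eapply Rle_trans; [apply (tri _ (u (S n)))|].
    specialize (Hu n). specialize (IHp (S n)). change (alpha ^ S n) with (alpha * alpha ^ n) in IHp.
    assert (0 <= alpha ^ n) by (apply pow_le; lra).
    assert (s * (d (u n) (u (S n)) + d (u (S n)) (u (S n + p)%nat))
            <= s * (alpha ^ n * B + alpha * alpha ^ n * K)) by (apply Rmult_le_compat_l; lra).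
    assert (alpha ^ n * K = alpha ^ n * (s * B + s * alpha * K)) by (rewrite <- HK2; reflexivity).
    lra.
Qed.

Theorem theorem1 (X : Type) (d : X -> X -> R) (s alpha : R) (T : X -> X) (x0 : X) :
  is_b_metric d s ->
  b_complete d ->
  b_continuous d T ->
  PA_contraction d T alpha ->
  s * alpha < 1 ->
  exists p : X,
    T p = p /\
    (forall q : X, T q = q -> q = p) /\
    (forall x : X, b_converges d (fun n => iter_map T n x) p).
Proof.
  intros [Hs [dpos [dz [dsym tri]]]] Hcomp Hcont [Hal [N HN]] Hsa.
  assert (d0 : forall x, d x x = 0) by (intros; apply dz; reflexivity).
  assert (powsmall : forall e, e > 0 -> exists M, forall n, (n >= M)%nat -> alpha ^ n < e).
  { intros e He. destruct (pow_lt_1_zero alpha ltac:(rewrite Rabs_right; lra) e He) as [M HM].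
    exists M. intros n Hn. specialize (HM n Hn). rewrite Rabs_right in HM; [lra|].
    apply Rle_ge, pow_le; lra. }
  assert (Horb : forall x, exists p, T p = p /\ b_converges d (fun n => iter_map T n x) p).
  { intros x.
    destruct (decay X d T alpha N dpos Hal HN x (T x)) as [B HB].
    assert (HB0 : 0 <= B).
    { specialize (HB 0%nat). simpl in HB. specialize (dpos x (T x)). lra. }
    set (u := fun n => iter_map T n x).
    assert (Hu : forall n, d (u n) (u (S n)) <= alpha ^ n * B).
    { intros n. unfold u. specialize (HB n).
      replace (iter_map T (S n) x) with (iter_map T n (T x)); [exact HB|].
      change (T x) with (iter_map T 1 x). rewrite iter_add. f_equal; lia. }
    pose proof (cauchy_geo d s alpha B u Hs ltac:(lra) Hsa HB0 tri d0 Hu) as Hc.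
    set (K := s * B / (1 - s * alpha)) in Hc.
    assert (HK : 0 <= K) by (unfold K, Rdiv; apply Rmult_le_pos; [apply Rmult_le_pos; lra| apply Rlt_le, Rinv_0_lt_compat; lra]).
    assert (Hcau : b_cauchy d u).
    { intros e He.
      destruct (powsmall (e / (K + 1))) as [M HM].
      { apply Rdiv_lt_0_compat; lra. }
      exists M. intros m n Hm Hn.
      assert (Hgen : forall a b, (a >= M)%nat -> (a <= b)%nat -> d (u a) (u b) < e).
      { intros a b Ha Hab. replace b with (a + (b - a))%nat by lia.
        eapply Rle_lt_trans; [apply Hc|].
        specialize (HM a Ha).
        assert (0 <= alpha ^ a) by (apply pow_le; lra).
        assert (alpha ^ a * (K + 1) < e).
        { apply (Rmult_lt_compat_r (K + 1)) in HM; [|lra].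
          replace (e / (K + 1) * (K + 1)) with e in HM by (field; lra). exact HM. }
        nra. }
      destruct (Nat.le_ge_cases n m).
      - apply Hgen; lia.
      - rewrite dsym. apply Hgen; lia. }
    destruct (Hcomp u Hcau) as [p Hp].
    exists p. split; [|exact Hp].
    pose proof (Hcont u p Hp) as HTp.
    apply dz. destruct (Rle_lt_or_eq_dec 0 (d (T p) p) (dpos _ _)) as [Hlt|Heq]; [|lra].
    exfalso.
    set (e := d (T p) p / (2 * s)).
    assert (He : e > 0) by (unfold e; apply Rdiv_lt_0_compat; lra).
    destruct (Hp e He) as [M1 H1]. destruct (HTp e He) as [M2 H2].
    specialize (H1 (S (M1 + M2))%nat ltac:(lia)).
    specialize (H2 (M1 + M2)%nat ltac:(lia)).
    change (T (u (M1 + M2)%nat)) with (u (S (M1 + M2))) in H2.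
    pose proof (tri (T p) (u (S (M1 + M2))) p) as Ht.
    rewrite dsym in H2.
    assert (s * (d (T p) (u (S (M1 + M2))) + d (u (S (M1 + M2))) p) < s * (2 * e))
      by (apply Rmult_lt_compat_l; lra).
    assert (s * (2 * e) = d (T p) p) by (unfold e; field; lra).
    lra. }
  destruct (Horb x0) as [p [Hp _]].
  assert (Huniq : forall q, T q = q -> q = p).
  { intros q Hq.
    destruct (decay X d T alpha N dpos Hal HN q p) as [B HB].
    assert (Hfix : forall m z, T z = z -> iter_map T m z = z).
    { induction m; intros z Hz; simpl; [reflexivity|rewrite IHm; auto]. }
    apply dz. destruct (Rle_lt_or_eq_dec 0 (d q p) (dpos _ _)) as [Hlt|Heq]; [|lra].
    exfalso.
    assert (HB0 : 0 < B).
    { specialize (HB 0%nat). simpl in HB. lra. }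
    destruct (powsmall (d q p / B)) as [M HM]; [apply Rdiv_lt_0_compat; lra|].
    specialize (HM M (Nat.le_refl _)). specialize (HB M).
    rewrite !Hfix in HB by auto.
    apply (Rmult_lt_compat_r B) in HM; [|lra].
    replace (d q p / B * B) with (d q p) in HM by (field; lra). lra. }
  exists p. split; [exact Hp|]. split; [exact Huniq|].
  intros x. destruct (Horb x) as [p' [Hp' Hc]].
  rewrite (Huniq p' Hp') in Hc. exact Hc.
Qed.
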